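(* For every finite loopless graph $G$ (multiple edges allowed), $\nu_2(G) \geq \frac{2}{3}\cdot \nu_3(G)$.
   Context: For an integer $k\geq 1$ and a graph $G$, $\nu_k(G)$ denotes the maximum number of edges of a $k$-edge-colorable subgraph of $G$ (a subgraph whose edges can be colored with $k$ colors so that adjacent edges receive different colors). *)

(* Defs.v *)
From mathcomp Require Import all_boot.
Set Implicit Arguments. Unset Strict Implicit. Unset Printing Implicit Defensive.

(* A finite multigraph: finite vertex type V, finite edge type E, and an
   endpoint map [ends : E -> V * V].  Parallel edges (distinct edges with the
   same endpoints) are allowed.  Looplessness is a separate hypothesis. *)

Definition loopless (V E : finType) (ends : E -> V * V) : Prop :=
  forall e : E, (ends e).1 != (ends e).2.

Definition share_end (V E : finType) (ends : E -> V * V) (e f : E) : bool :=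
  [|| (ends e).1 == (ends f).1, (ends e).1 == (ends f).2,
      (ends e).2 == (ends f).1 | (ends e).2 == (ends f).2].

Definition adjacent_edges (V E : finType) (ends : E -> V * V) (e f : E) : bool :=
  (e != f) && share_end ends e f.

Definition k_edge_colorable (V E : finType) (ends : E -> V * V) (k : nat)
    (F : {set E}) : bool :=
  [exists c : {ffun E -> 'I_k},
     [forall e in F, forall f in F, adjacent_edges ends e f ==> (c e != c f)]].

Definition nu (V E : finType) (ends : E -> V * V) (k : nat) : nat :=
  \max_(F : {set E} | k_edge_colorable ends k F) #|F|.

(* Main.v *)
Require Import Defs.
From mathcomp Require Import all_boot zify.
Set Implicit Arguments. Unset Strict Implicit. Unset Printing Implicit Defensive.

Lemma recolor (i j k : 'I_3) : j != i -> k != i ->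
  @inord 1 ((j + 5 - i) %% 3) = inord ((k + 5 - i) %% 3) -> j = k.
Proof.
move=> /eqP ji /eqP ki /(congr1 val).
have l : forall m : 'I_3, m != i -> (m + 5 - i) %% 3 < 2.
  move=> m /eqP mi; have := ltn_ord m; have := ltn_ord i.
  have : (nat_of_ord m <> nat_of_ord i) by move=> h; apply: mi; apply: val_inj.
  lia.
rewrite /= !inordK ?l //; try (apply/eqP; done).
have : (nat_of_ord j <> nat_of_ord i) by move=> h; apply: ji; apply: val_inj.
have : (nat_of_ord k <> nat_of_ord i) by move=> h; apply: ki; apply: val_inj.
have := ltn_ord j; have := ltn_ord k; have := ltn_ord i.
move=> *; apply: ord_inj; lia.
Qed.

Lemma sum3 (E : finType) (F : {set E}) (c : E -> 'I_3) :
  \sum_(i < 3) #|[set e in F | c e != i]| = 2 * #|F|.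
Proof.
have -> : \sum_(i < 3) #|[set e in F | c e != i]| = \sum_(i < 3) \sum_(e in F) (c e != i : nat).
  apply: eq_bigr => i _; rewrite -sum1dep_card /=.
  by rewrite big_mkcondr /=; apply: eq_bigr => e _; case: (c e != i).
rewrite exchange_big /= -sum1_card big_distrr /=; apply: eq_bigr => e _.
rewrite muln1 !big_ord_recr big_ord0 /=.
by case: (c e) => [[|[|[|]]] ?].
Qed.

Theorem proposition1 (V E : finType) (ends : E -> V * V) :
  loopless ends -> 2 * nu ends 3 <= 3 * nu ends 2.
Proof.
move=> _; rewrite /nu.
have H0 : 0 < #|[pred F : {set E} | k_edge_colorable ends 3 F]|.
  apply/card_gt0P; exists set0; rewrite inE.
  apply/existsP; exists [ffun=> ord0]; apply/forallP => e; by rewrite inE.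
case: (eq_bigmax_cond (fun F : {set E} => #|F|) H0) => F FP Hmax.
have -> : \max_(F | k_edge_colorable ends 3 F) #|F| = #|F| by exact: Hmax.
move: FP; rewrite inE => /existsP[c /forallP Hc].
have key : forall i : 'I_3, 3 * #|[set e in F | c e != i]| <=
    3 * \max_(G | k_edge_colorable ends 2 G) #|G|.
  move=> i; rewrite leq_mul2l /=; apply: leq_bigmax_cond.
  apply/existsP; exists [ffun e => @inord 1 ((c e + 5 - i) %% 3)]; apply/forallP => e; apply/implyP.
  rewrite inE => /andP[eF cei]; apply/forallP => f; apply/implyP.
  rewrite inE => /andP[fF cfi]; apply/implyP => adj; rewrite !ffunE.
  move: (Hc e); rewrite eF => /forallP /(_ f); rewrite fF adj /= => cne.
  apply: contra cne => geq.
  by apply/eqP; apply: recolor cei cfi (eqP geq).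
rewrite -(sum3 F c) mulnC.
have -> : (\max_(F0 | k_edge_colorable ends 2 F0) #|F0|) * 3 =
   \sum_(i < 3) \max_(F0 | k_edge_colorable ends 2 F0) #|F0|.
  by rewrite sum_nat_const card_ord mulnC.
by apply: leq_sum => i _; rewrite -(leq_pmul2l (isT : 0 < 3)); apply: key.
Qed.
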